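(* $M_{RC}^\mathcal{K}=(\Pi,\sigma,\gamma)$ is a model of $\mathcal{K}$.
   Context: DRSL setting: a ranked standpoint structure $M=(\Pi,\sigma,\gamma)$ has a nonempty set $\Pi$ of precisifications, $\sigma$ mapping each standpoint symbol to a nonempty subset of $\Pi$ with $\sigma( * )=\Pi$, and $\gamma$ mapping each precisification to a ranked interpretation (a convex function from classical valuations to $\mathds{N}\cup\{\infty\}$); $M,\pi\Vdash\phi$ iff $\gamma(\pi)\Vdash\phi$ for a propositional KLM formula $\phi$ ($\phi::=\alpha\mid\alpha\mathrel{|}\!\sim\beta\mid\phi\wedge\phi$), $M,\pi\Vdash\Box_s\psi$ (resp. $\Diamond_s\psi$) iff $\psi$ holds at all (resp. some) $\pi'\in\sigma(s)$, and $M\Vdash\psi$ iff it holds at every $\pi$; $M$ is a model of $\mathcal{K}$ if it satisfies every formula of $\mathcal{K}$. Let $\mathcal{K}$ be a DRSL knowledge base in normal form (formulas $\#_s\phi$, $\#\in\{\Box,\Diamond\}$, $\phi$ a KLM formula, plus sharpening statements $s_1\preceq s_2$), $S$ its set of standpoints, and $\preceq^+$ the reflexive-transitive closure of its sharpening statements (with $s\preceq^+*$). Define $K_s=\{\phi\mid\Box_t\phi\in\mathcal{K}, s\preceq^+t\}$ and $K_s^\phi=K_s\cup\{\phi\}$ for $\Diamond_s\phi\in\mathcal{K}$. For a propositional KLM knowledge base $K$, $R^K_{RC}$ is its rational closure ranked model (the minimum ranked model of $K$ under the pointwise order). Then $M_{RC}^\mathcal{K}$ has $\Pi=\{\pi_s\mid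 s\in S-\{*\}\}\cup\{\pi_s^\phi\mid\Diamond_s\phi\in\mathcal{K}\}$, $\sigma(s)=\{\pi_t\mid t\preceq^+s\}\cup\{\pi_t^\phi\mid t\preceq^+s\}$, $\gamma(\pi_s)=R^{K_s}_{RC}$, $\gamma(\pi_s^\phi)=R^{K_s^\phi}_{RC}$. *)

(* Defs.v *)
From mathcomp Require Import all_boot.
From Stdlib Require Import ClassicalEpsilon List.

Set Implicit Arguments.
Unset Strict Implicit.
Unset Printing Implicit Defensive.

Section Logic.
Variable P : finType.

Inductive pform : Type :=
  | PTop | PBot
  | PAtom of P
  | PNeg of pform
  | PAnd of pform & pform
  | POr of pform & pform
  | PImp of pform & pform
  | PIff of pform & pform.

Definition valuation := {ffun P -> bool}.

Fixpoint peval (u : valuation) (a : pform) : bool :=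
  match a with
  | PTop => true
  | PBot => false
  | PAtom p => u p
  | PNeg a => ~~ peval u a
  | PAnd a b => peval u a && peval u b
  | POr a b => peval u a || peval u b
  | PImp a b => peval u a ==> peval u b
  | PIff a b => peval u a == peval u b
  end.

Inductive klm : Type :=
  | KProp of pform
  | KCond of pform & pform
  | KAnd of klm & klm.

(* ranks in N u {oo}; None stands for oo *)
Definition rank := option nat.

Definition rank_le (a b : rank) : Prop :=
  match a, b with
  | _, None => True
  | None, Some _ => False
  | Some m, Some n => (m <= n)%N
  end.

Definition convex (r : valuation -> rank) : Prop :=
  forall u n, r u = Some n -> forall m, (m < n)%N -> exists v, r v = Some m.

Record rinterp : Type := RInterp {
  rk : valuation -> rank;
  rk_convex : convex rk }.

Fixpoint rsat (R : rinterp) (phi : klm) : Prop :=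
  match phi with
  | KProp a => forall u, rk R u <> None -> peval u a
  | KCond a b =>
      forall u n, rk R u = Some n -> peval u a ->
        (forall v m, rk R v = Some m -> peval v a -> (n <= m)%N) ->
        peval u b
  | KAnd p q => rsat R p /\ rsat R q
  end.

Definition rmodel (Kb : klm -> Prop) (R : rinterp) : Prop :=
  forall phi, Kb phi -> rsat R phi.

Definition rle (R1 R2 : rinterp) : Prop := forall u, rank_le (rk R1 u) (rk R2 u).

Definition minimum_model (Kb : klm -> Prop) (R : rinterp) : Prop :=
  rmodel Kb R /\ forall R', rmodel Kb R' -> rle R R'.

Definition rinterp_inf : rinterp.
Proof. by exists (fun _ => None) => u n. Defined.

Definition RC (Kb : klm -> Prop) : rinterp :=
  epsilon (inhabits rinterp_inf) (minimum_model Kb).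

End Logic.

Section DRSL.
Variable P : finType.
Variable St : Type.
Variable star : St.      (* the universal standpoint * *)

(* statements of a DRSL knowledge base in normal form *)
Inductive stmt : Type :=
  | SBox of St & klm P
  | SDia of St & klm P
  | SSharp of St & St.

Definition kb := list stmt.

Record rstruct : Type := RStruct {
  Pi : Type;
  sg : St -> Pi -> Prop;
  gm : Pi -> rinterp P }.
Arguments sg : clear implicits.
Arguments gm : clear implicits.

(* M, pi ||- statement (normal-form statements do not depend on pi) *)
Definition ssat (M : rstruct) (pi : Pi M) (st : stmt) : Prop :=
  match st with
  | SBox s phi => forall pi', sg M s pi' -> rsat (gm M pi') phi
  | SDia s phi => exists2 pi', sg M s pi' & rsat (gm M pi') phi
  | SSharp s1 s2 => forall pi', sg M s1 pi' -> sg M s2 pi'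
  end.
Arguments ssat : clear implicits.

Definition is_model (M : rstruct) (K : kb) : Prop :=
  forall st, In st K -> forall pi : Pi M, ssat M pi st.

Definition mentions (st : stmt) (s : St) : Prop :=
  match st with
  | SBox t _ | SDia t _ => t = s
  | SSharp t1 t2 => t1 = s \/ t2 = s
  end.

Definition in_S (K : kb) (s : St) : Prop :=
  s = star \/ exists2 st, In st K & mentions st s.

Inductive preceq (K : kb) : St -> St -> Prop :=
  | prec_refl s : preceq K s s
  | prec_stmt s1 s2 : In (SSharp s1 s2) K -> preceq K s1 s2
  | prec_trans s1 s2 s3 : preceq K s1 s2 -> preceq K s2 s3 -> preceq K s1 s3
  | prec_star s : preceq K s star.

Definition Ks (K : kb) (s : St) : klm P -> Prop :=
  fun phi => exists2 t, In (SBox t phi) K & preceq K s t.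

Definition Ksphi (K : kb) (s : St) (phi : klm P) : klm P -> Prop :=
  fun psi => Ks K s psi \/ psi = phi.

Inductive prec : Type :=
  | PiS of St
  | PiD of St & klm P.

Definition prec_st (p : prec) : St :=
  match p with PiS s => s | PiD s _ => s end.

Definition in_Pi (K : kb) (p : prec) : Prop :=
  match p with
  | PiS s => in_S K s /\ s <> star
  | PiD s phi => In (SDia s phi) K
  end.

Definition M_RC (K : kb) : rstruct :=
  {| Pi := {p : prec | in_Pi K p};
     sg := fun s p => preceq K (prec_st (proj1_sig p)) s;
     gm := fun p => match proj1_sig p with
                       | PiS s => RC (Ks K s)
                       | PiD s phi => RC (Ksphi K s phi)
                       end |}.

End DRSL.

(* Main.v *)
From Stdlib Require Import ClassicalEpsilon List.
Require Import Defs.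
From mathcomp Require Import all_boot.

Set Implicit Arguments.
Unset Strict Implicit.
Unset Printing Implicit Defensive.

Section Aux.
Variable P : finType.
Notation V := (valuation P).

Fixpoint rsatf (r : V -> rank) (phi : klm P) : Prop :=
  match phi with
  | KProp a => forall u, r u <> None -> peval u a
  | KCond a b =>
      forall u n, r u = Some n -> peval u a ->
        (forall v m, r v = Some m -> peval v a -> (n <= m)%N) ->
        peval u b
  | KAnd p q => rsatf r p /\ rsatf r q
  end.

Lemma rsatE R phi : rsat R phi <-> rsatf (rk R) phi.
Proof. elim: phi => //= p IHp q IHq; tauto. Qed.

Lemma transfer (f g : V -> rank) :
  (forall u, f u = None <-> g u = None) ->
  (forall u v n m n' m', f u = Some n -> f v = Some m -> g u = Some n' ->
      g v = Some m' -> (n <= m)%N = (n' <= m')%N) ->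
  forall phi, rsatf f phi -> rsatf g phi.
Proof.
move=> HN Ho; elim=> [a|a b|p IHp q IHq] /=.
- move=> H u Hu; apply: H => Hf; apply: Hu; exact/HN.
- move=> H u n' Hu Ha Hmin.
  case Hfu: (f u) => [n|]; last by move/HN: Hfu; rewrite Hu.
  apply: (H u n Hfu Ha) => v m Hfv Hav.
  case Hgv: (g v) => [m'|]; last by move/HN: Hgv; rewrite Hfv.
  rewrite (Ho u v n m n' m') //; exact: Hmin Hgv Hav.
- by case=> /IHp ? /IHq ?.
Qed.

Section Comp.
Variable f : V -> rank.
Definition Sr : seq nat := undup (pmap f (enum V)).
Definition comp (u : V) : rank :=
  match f u with Some N => Some (count (fun n => n < N) Sr) | None => None end.

Lemma memSr N : N \in Sr -> exists v, f v = Some N.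
Proof.
rewrite mem_undup mem_pmap => /mapP [v _ Hv]; by exists v.
Qed.

Lemma inSr v N : f v = Some N -> N \in Sr.
Proof.
move=> H; rewrite mem_undup mem_pmap; apply/mapP; exists v => //.
by rewrite mem_enum.
Qed.

Lemma count_le N : count (fun n => n < N) Sr <= N.
Proof.
rewrite -size_filter -[N in _ <= N](size_iota 0 N).
apply: uniq_leq_size; first by rewrite filter_uniq ?undup_uniq.
by move=> x; rewrite mem_filter mem_iota => /andP [H _].
Qed.

Lemma count_strict N M : N \in Sr -> N < M ->
  count (fun n => n < N) Sr < count (fun n => n < M) Sr.
Proof.
move=> HN HNM.
have H1 : count (predU (fun n => n < N) (pred1 N)) Sr <= count (fun n => n < M) Sr.
  apply: sub_count => x /= /orP [H|/eqP ->] //; exact: ltn_trans H HNM.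
apply: leq_trans H1.
have := count_predUI (fun n => n < N) (pred1 N) Sr.
have -> : count (predI (fun n => n < N) (pred1 N)) Sr = 0.
  apply/eqP; rewrite -leqn0 -(count_pred0 Sr); apply: sub_count => x /= /andP [H /eqP E].
  by rewrite E ltnn in H.
rewrite addn0 => ->.
by rewrite (count_uniq_mem _ (undup_uniq _)) HN addn1.
Qed.

Lemma count_mono N M : N <= M ->
  count (fun n => n < N) Sr <= count (fun n => n < M) Sr.
Proof. move=> H; apply: sub_count => x /= Hx; exact: leq_trans Hx H. Qed.

Lemma comp_convex : convex comp.
Proof.
move=> u k; rewrite /comp; case: (f u) => // N [<-] {k u}.
suff: forall m, m < count (fun n => n < N) Sr -> exists2 x, x \in Sr & count (fun n => n < x) Sr = m.
  move=> H m /H [x /memSr [v Hv] <-]; exists v; by rewrite /comp Hv.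
elim: N => [|N IH] m.
  by rewrite (@eq_count _ _ pred0) ?count_pred0.
have -> : count (fun n => n < N.+1) Sr = count (fun n => n < N) Sr + (N \in Sr).
  rewrite -(count_uniq_mem _ (undup_uniq _)) -count_predUI.
  have -> : count (predI (fun n => n < N) (pred1 N)) Sr = 0.
    apply/eqP; rewrite -leqn0 -(count_pred0 Sr); apply: sub_count => x /= /andP [H /eqP E].
    by rewrite E ltnn in H.
  rewrite addn0; apply: eq_count => x /=; by rewrite ltnS leq_eqVlt orbC.
case HN: (N \in Sr) => /= Hm.
  rewrite addn1 ltnS leq_eqVlt in Hm.
  case/orP: Hm => [/eqP ->|]; last exact: IH.
  by exists N.
rewrite addn0 in Hm; exact: IH.
Qed.

Lemma comp_N u : f u = None <-> comp u = None.
Proof. rewrite /comp; case: (f u) => //. Qed.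

Lemma comp_ord u v n m n' m' : f u = Some n -> f v = Some m -> comp u = Some n' ->
      comp v = Some m' -> (n <= m)%N = (n' <= m')%N.
Proof.
rewrite /comp => Hu Hv; rewrite Hu Hv => -[<-] [<-].
case: (leqP n m) => H.
  by rewrite count_mono.
apply/esym/negbTE; rewrite -ltnNge; apply: count_strict => //; exact: inSr Hv.
Qed.

Lemma comp_le u : rank_le (comp u) (f u).
Proof. rewrite /comp; case: (f u) => //= N; exact: count_le. Qed.

End Comp.

Section Inf.
Variable Kb : klm P -> Prop.
Definition Q (u : V) n := exists R, rmodel Kb R /\ rk R u = Some n.
Definition qb u n : bool := if excluded_middle_informative (Q u n) then true else false.
Lemma qbP u n : qb u n <-> Q u n.
Proof. rewrite /qb; case: excluded_middle_informative => //. Qed.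

Definition rstar (u : V) : rank :=
  match excluded_middle_informative (exists n, qb u n) with
  | left H => Some (ex_minn H)
  | right _ => None
  end.

Lemma rstar_some u n : rstar u = Some n -> Q u n /\ forall m, Q u m -> n <= m.
Proof.
rewrite /rstar; case: excluded_middle_informative => // H [<-].
case: ex_minnP => m /qbP Hm Hmin; split => // k /qbP; exact: Hmin.
Qed.

Lemma rstar_le R u : rmodel Kb R -> rank_le (rstar u) (rk R u).
Proof.
move=> HR; case E: (rk R u) => [n|]; last by case: (rstar u).
have Hq : Q u n by exists R.
rewrite /rstar; case: excluded_middle_informative => [H|H]; last first.
  by case: H; exists n; apply/qbP.
case: ex_minnP => m _ Hmin /=; apply: Hmin; exact/qbP.
Qed.

Lemma rstar_sat phi : (forall R, rmodel Kb R -> rsat R phi) -> rsatf rstar phi.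
Proof.
elim: phi => [a|a b|p IHp q IHq] /= Hall.
- move=> u; case E: (rstar u) => [n|] // _.
  case: (rstar_some E) => [[R [HR Hu]] _].
  by apply: (Hall R HR); rewrite Hu.
- move=> u n E Ha Hmin.
  case: (rstar_some E) => [[R [HR Hu]] _].
  apply: (Hall R HR u n Hu Ha) => v m Hv Hav.
  have := rstar_le v HR; rewrite Hv.
  case E': (rstar v) => [m''|] //= Hle.
  exact: leq_trans (Hmin v m'' E' Hav) Hle.
- split; [apply: IHp | apply: IHq] => R HR; by case: (Hall R HR).
Qed.

Lemma min_exists : exists R, minimum_model Kb R.
Proof.
exists (RInterp (@comp_convex rstar)); split.
- move=> phi Hphi; apply/rsatE => /=.
  apply: (transfer (@comp_N rstar) (@comp_ord rstar)).
  apply: rstar_sat => R HR; exact: HR.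
- move=> R' HR u /=.
  have H1 := @comp_le rstar u; have H2 := rstar_le u HR.
  move: H1 H2; case: (comp rstar u) => [a|]; case: (rstar u) => [b|];
    case: (rk R' u) => [c|] //=; exact: leq_trans.
Qed.

Lemma RC_min : minimum_model Kb (RC Kb).
Proof. rewrite /RC; apply: epsilon_spec; exact: min_exists. Qed.

End Inf.
End Aux.

Theorem lemma5 (P : finType) (St : Type) (star : St) (K : kb P St) :
  is_model (M_RC star K) K.
Proof.
move=> st Hin pi; case: st Hin => [s phi|s phi|s1 s2] Hin /=.
- move=> [[p|t psi] Hp] /= Hpre.
  + case: (RC_min (Ks star K p)) => Hm _; apply: Hm; by exists s.
  + case: (RC_min (Ksphi star K t psi)) => Hm _; apply: Hm; left; by exists s.
- exists (exist _ (PiD s phi) Hin) => /=; first exact: prec_refl.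
  case: (RC_min (Ksphi star K s phi)) => Hm _; apply: Hm; by right.
- move=> pi' H; apply: prec_trans H _; exact: prec_stmt.
Qed.
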